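(* (i) Let $G$ be a digraph on $n$ vertices with $\delta^0(G)\geq 7n/8$ and let $x,y\in V(G)$ be distinct. Then for every orientation $Q$ of a path on $n$ vertices, $G$ contains a Hamilton path which is a copy of $Q$ whose endvertices are mapped to $x$ and $y$ (initial vertex of $Q$ to $x$, final vertex to $y$). (ii) Let $m\geq 10$ and let $G$ be a bipartite digraph with vertex classes $A,B$, $|A|=m+1$, $|B|=m$ (all edges go between $A$ and $B$, in either direction), and suppose $\delta^0(G)\geq (7m+2)/8$. Let $x,y\in A$ be distinct. Then for every orientation $Q$ of a path on $2m+1$ vertices, $G$ contains a Hamilton path which is a copy of $Q$ whose initial vertex is mapped to $x$ and final vertex to $y$.
   Context: A digraph has no loops and at most one edge from $x$ to $y$ for each ordered pair of distinct vertices (edges $xy$ and $yx$ may both be present). $\delta^0(G)$ is the minimum over all vertices of the minimum of in- and outdegree. A copy of an oriented path $Q$ in $G$ is an injective map $\phi:V(Q)\to V(G)$ with $\phi(u)\phi(v)\in E(G)$ for every edge $uv$ of $Q$; it is a Hamilton path if $\phi$ is a bijection. *)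

(* Defs.v *)
From mathcomp Require Import all_boot.
Set Implicit Arguments. Unset Strict Implicit. Unset Printing Implicit Defensive.

(* A digraph on a finite vertex type V is an irreflexive relation E : rel V
   (E u v means there is an edge u -> v); at most one edge per ordered pair
   is automatic. *)
Definition digraph (V : finType) (E : rel V) : Prop := irreflexive E.

Definition outdeg (V : finType) (E : rel V) (v : V) : nat := #|[set w | E v w]|.
Definition indeg  (V : finType) (E : rel V) (v : V) : nat := #|[set w | E w v]|.

(* An orientation Q of a path on k vertices 0,1,...,k-1 is given by k-1
   booleans: bit i = true means the edge i -> i+1, false means i+1 -> i. *)
Definition path_orientation (k : nat) := (k.-1).-tuple bool.

Definition copy_of_path (V : finType) (E : rel V) (k : nat)
  (Q : path_orientation k) (phi : 'I_k -> V) : Prop :=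
  injective phi /\
  forall i j : 'I_k, val j = (val i).+1 ->
    if nth false Q (val i) then E (phi i) (phi j) else E (phi j) (phi i).

Definition hamilton_copy_xy (V : finType) (E : rel V) (k : nat)
  (Q : path_orientation k) (x y : V) : Prop :=
  exists phi : 'I_k -> V,
    [/\ copy_of_path E Q phi, bijective phi,
        (forall i : 'I_k, val i = 0 -> phi i = x) &
        (forall i : 'I_k, val i = k.-1 -> phi i = y)].

(* Main.v *)
Require Import Defs.
From mathcomp Require Import all_boot.
From mathcomp Require Import zify.
Set Implicit Arguments. Unset Strict Implicit. Unset Printing Implicit Defensive.

Definition compat (V : finType) (E : rel V) (b : bool) (u v : V) : bool :=
  if b then E u v else E v u.
Definition okp (V : finType) (E : rel V) (Q : seq bool) (g : nat -> V) (l : nat) :=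
  compat E (nth false Q l) (g l) (g l.+1).
Definition badcnt (V : finType) (E : rel V) (Q : seq bool) (K : nat) (g : nat -> V) :=
  count (fun l => ~~ okp E Q g l) (iota 0 K.-1).
Definition swapf (V : finType) (g : nat -> V) (p j : nat) : nat -> V :=
  fun l => if l == p then g j else if l == j then g p else g l.

Lemma compat_sym (V : finType) (E : rel V) b u v : compat E b u v = compat E (~~ b) v u.
Proof. by case: b. Qed.

Lemma count_lt (T : eqType) (a b : pred T) (s : seq T) x0 :
  (forall x, a x -> b x) -> x0 \in s -> b x0 -> ~~ a x0 -> count a s < count b s.
Proof.
move=> sab; elim: s => //= y s IH; rewrite inE => /orP [/eqP -> | xs] bx ax.
  rewrite bx (negbTE ax) /= add0n add1n ltnS; exact: sub_count.
have := IH xs bx ax; case ay: (a y); first by rewrite (sab _ ay).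
by case: (b y) => /=; lia.
Qed.

Lemma improve (V : finType) (E : rel V) (Q : seq bool) (K p j l0 : nat) (g : nat -> V) :
  0 < p -> 0 < j -> j != p -> j != p.-1 -> j != p.+1 ->
  compat E (nth false Q p.-1) (g p.-1) (g j) ->
  compat E (nth false Q p) (g j) (g p.+1) ->
  compat E (nth false Q j.-1) (g j.-1) (g p) ->
  compat E (nth false Q j) (g p) (g j.+1) ->
  (l0 == p.-1) || (l0 == p) -> l0 < K.-1 -> ~~ okp E Q g l0 ->
  badcnt E Q K (swapf g p j) < badcnt E Q K g.
Proof.
move=> p0 j0 jp jp1 jp2 c1 c2 c3 c4 hl0 lK bad.
have key : forall l, (l == p.-1) || (l == p) || (l == j.-1) || (l == j) ->
   okp E Q (swapf g p j) l.
  move=> l /orP [/orP [/orP [] |] |] /eqP ->; rewrite /okp /swapf.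
  - have -> : p.-1.+1 = p by lia.
    rewrite eqxx (_ : (p.-1 == p) = false); last by apply/eqP; lia.
    by rewrite (_ : (p.-1 == j) = false) //; apply/eqP; lia.
  - rewrite eqxx (_ : (p.+1 == p) = false); last by apply/eqP; lia.
    by rewrite (_ : (p.+1 == j) = false) //; apply/eqP; lia.
  - have -> : j.-1.+1 = j by lia.
    rewrite (_ : (j.-1 == p) = false); last by apply/eqP; lia.
    rewrite (_ : (j.-1 == j) = false); last by apply/eqP; lia.
    by rewrite (_ : (j == p) = false) ?eqxx //; apply/eqP; lia.
  - rewrite (_ : (j == p) = false); last by apply/eqP; lia.
    rewrite eqxx (_ : (j.+1 == p) = false); last by apply/eqP; lia.
    by rewrite (_ : (j.+1 == j) = false) //; apply/eqP; lia.
apply: (@count_lt _ _ _ _ l0).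
- move=> l; case: (boolP ((l == p.-1) || (l == p) || (l == j.-1) || (l == j))).
    by move=> /key ->.
  move=> hn; rewrite /okp /swapf.
  rewrite (_ : (l == p) = false); last by apply/eqP; lia.
  rewrite (_ : (l == j) = false); last by apply/eqP; lia.
  rewrite (_ : (l.+1 == p) = false); last by apply/eqP; lia.
  by rewrite (_ : (l.+1 == j) = false) //; apply/eqP; lia.
- by rewrite mem_iota; lia.
- exact: bad.
- by rewrite negbK key // -orbA hl0.
Qed.

Lemma iterate (V : finType) (E : rel V) (Q : seq bool) (K : nat) (Cls : (nat -> V) -> Prop) :
  (forall g, Cls g -> 0 < badcnt E Q K g ->
     exists g', Cls g' /\ badcnt E Q K g' < badcnt E Q K g) ->
  forall g, Cls g -> exists g, Cls g /\ badcnt E Q K g = 0.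
Proof.
move=> H g Cg.
have : forall n g, badcnt E Q K g <= n -> Cls g -> exists g, Cls g /\ badcnt E Q K g = 0.
  elim=> [|n IH] g0 hb Cg0.
    by exists g0; split=> //; lia.
  case: (posnP (badcnt E Q K g0)) => hz; first by exists g0.
  have [g' [Cg' lt]] := H _ Cg0 hz.
  apply: (IH g') => //; lia.
by move=> /(_ (badcnt E Q K g) g (leqnn _) Cg).
Qed.

Lemma finish (V : finType) (E : rel V) (K : nat) (Q : path_orientation K) (x y : V)
  (g : nat -> V) :
  #|V| = K -> 0 < K -> {in iota 0 K &, injective g} -> g 0 = x -> g K.-1 = y ->
  badcnt E Q K g = 0 -> hamilton_copy_xy E Q x y.
Proof.
move=> cV K0 ginj g0 gK bc.
have allok : forall l, l < K.-1 -> okp E Q g l.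
  move=> l lK; have : ~~ has (fun l => ~~ okp E Q g l) (iota 0 K.-1).
    by rewrite has_count -/(badcnt E Q K g) bc.
  move=> /hasPn /(_ l).
  by rewrite mem_iota negbK; apply; lia.
have phiinj : injective (fun i : 'I_K => g i).
  move=> i1 i2 /= h; apply: val_inj => /=; apply: ginj => //; by rewrite mem_iota add0n ltn_ord andbT leq0n.
pose phi := fun i : 'I_K => g i.
exists phi; split.
- split=> // i j hij /=.
  have hij' : (j : nat) = i.+1 := hij.
  have h : i < K.-1 by have := ltn_ord j; lia.
  by have := allok i h; rewrite /okp /compat /phi hij'.
- apply: inj_card_bij => //; by rewrite card_ord cV.
- by move=> i h; rewrite /phi (_ : nat_of_ord i = 0).
- by move=> i h; rewrite /phi (_ : nat_of_ord i = K.-1).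
Qed.

Lemma count_inj_le (V : finType) (s : seq nat) (f : nat -> V) (P R : pred V) :
  uniq s -> {in s &, injective f} -> (forall j, j \in s -> R (f j)) ->
  count (fun j => P (f j)) s <= #|[pred w | P w && R w]|.
Proof.
move=> us finj hR.
have -> : count (fun j => P (f j)) s = count P (map f s) by rewrite count_map.
rewrite -size_filter cardE; apply: uniq_leq_size.
  by apply: filter_uniq; rewrite map_inj_in_uniq.
move=> w; rewrite mem_filter => /andP [Pw /mapP [j js ew]]; subst w.
by rewrite mem_enum inE /= Pw hR.
Qed.

Lemma count_or_le (T : Type) (a b : pred T) s :
  count (fun x => a x || b x) s <= count a s + count b s.
Proof. by elim: s => //= x s IH; case: (a x); case: (b x) => /=; lia. Qed.

Lemma exists_in (s : seq nat) (P : pred nat) :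
  count (predC P) s < size s -> exists2 j, j \in s & P j.
Proof.
by move=> h; apply/hasP; rewrite has_count lt0n; apply/eqP => c0; move: h; rewrite -(count_predC P s) c0 ltnn.
Qed.

Lemma miss_card (V : finType) (E : rel V) (a : V) (b : bool) (C : pred V) :
  (forall w, E a w || E w a -> C w) ->
  #|[pred w | ~~ compat E b a w && C w]| + (if b then outdeg E a else indeg E a) = #|C|.
Proof.
move=> hC; rewrite -(cardID (fun w => compat E b a w) C) addnC; congr (_ + _).
  rewrite /outdeg /indeg; case: b; apply: eq_card => w; rewrite !inE /compat /=;
  apply/idP/andP => [h|[]] //; split => //; apply: hC; by rewrite h ?orbT.
Qed.

Lemma card_minus1 (V : finType) (P : pred V) u :
  #|[pred w | P w && (w != u)]| + P u = #|P|.
Proof.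
rewrite (cardD1 u P) addnC; congr (_ + _); apply: eq_card => w; rewrite !inE /= andbC.
by [].
Qed.

Lemma swap_inj (V : finType) (K p j : nat) (g : nat -> V) :
  p < K -> j < K -> {in iota 0 K &, injective g} -> {in iota 0 K &, injective (swapf g p j)}.
Proof.
move=> pK jK ginj l1 l2 h1 h2; rewrite /swapf.
have gi : forall a b, g a = g b -> a < K -> b < K -> a = b.
  by move=> a b e ha hb; apply: ginj; rewrite // mem_iota; lia.
move: h1 h2; rewrite !mem_iota => h1 h2.
case: (l1 =P p) => e1; case: (l2 =P p) => e2; case: (l1 =P j) => f1; case: (l2 =P j) => f2;
move=> /gi; lia.
Qed.

Lemma compat_split (V : finType) (E : rel V) b u v :
  ~~ compat E b v u -> ~~ compat E true u v || ~~ compat E false u v.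
Proof. by rewrite /compat; case: b; case: (E u v); case: (E v u). Qed.

Lemma compat_split' (V : finType) (E : rel V) b u v :
  ~~ compat E b u v -> ~~ compat E true u v || ~~ compat E false u v.
Proof. by rewrite /compat; case: b; case: (E u v); case: (E v u). Qed.

Ltac keep_arith := repeat match goal with
 | H : ?P |- _ => lazymatch P with
     | is_true (_ <= _) => fail
     | is_true (_ != _) => fail
     | is_true (_ == _) => fail
     | _ = _ => fail
     | is_true (_ && _) => fail
     | ~ (_ = _) => fail
     | _ => clear H
   end
 end.
Ltac slia := keep_arith; lia.

Lemma count3 (s : seq nat) a b c : uniq s ->
  count (fun j => (j == a) || (j == b) || (j == c)) s <= 3.
Proof.
move=> us.
have h1 : forall z, count (fun j => j == z) s <= 1.
  by move=> z; have := count_uniq_mem z us; rewrite (eq_count (a2 := pred1 z)) // => ->; case: (z \in s).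
apply: leq_trans (count_or_le _ _ _) _.
have := count_or_le (fun j => j == a) (fun j => j == b) s.
have := h1 a; have := h1 b; have := h1 c; lia.
Qed.

Lemma miss1 (V : finType) (E : rel V) (irr : irreflexive E)
  (H : forall v : V, 7 * #|V| <= 8 * outdeg E v /\ 7 * #|V| <= 8 * indeg E v) a b :
  8 * #|[pred w | ~~ compat E b a w && (w != a)]| + 8 <= #|V|.
Proof.
have hC : forall w, E a w || E w a -> predC1 a w.
  move=> w /orP [] h; apply/eqP => e; subst w; by rewrite irr in h.
have e := @miss_card V E a b (predC1 a) hC.
rewrite cardC1 in e.
have -> : #|[pred w | ~~ compat E b a w && (w != a)]| =
          #|[pred w | ~~ compat E b a w && predC1 a w]| by apply: eq_card.
have : 0 < #|V| by apply/card_gt0P; exists a.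
have := H a; case: b e => /= e; lia.
Qed.

Lemma count4 (T : Type) (s : seq T) (a b c d : pred T) :
  count (fun j => ~~ [&& a j, b j, c j & d j]) s <=
  count (fun j => ~~ a j) s + count (fun j => ~~ b j) s + count (fun j => ~~ c j) s
  + count (fun j => ~~ d j) s.
Proof.
elim: s => //= x s IH; case: (a x); case: (b x); case: (c x); case: (d x) => /=; lia.
Qed.

Lemma count_split2 (T : Type) (s : seq T) (a b c : pred T) :
  (forall j, a j -> b j || c j) -> count a s <= count b s + count c s.
Proof.
move=> h; apply: leq_trans (count_or_le b c s); apply: sub_count => j; exact: h.
Qed.

Lemma step1 (V : finType) (E : rel V) (irr : irreflexive E)
  (H : forall v : V, 7 * #|V| <= 8 * outdeg E v /\ 7 * #|V| <= 8 * indeg E v)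
  (Q : seq bool) (x y : V) (g : nat -> V) :
  8 <= #|V| ->
  {in iota 0 #|V| &, injective g} -> g 0 = x -> g #|V|.-1 = y -> 0 < badcnt E Q #|V| g ->
  exists g', [/\ {in iota 0 #|V| &, injective g'}, g' 0 = x, g' #|V|.-1 = y &
             badcnt E Q #|V| g' < badcnt E Q #|V| g].
Proof.
set n := #|V| => n8 ginj g0 gn bpos.
have gi : forall a b, a < n -> b < n -> g a = g b -> a = b.
  by move=> a b ha hb e; apply: ginj; rewrite // mem_iota; lia.
have gne : forall a b, a < n -> b < n -> a != b -> g a != g b.
  by move=> a b ha hb nab; apply/eqP => /gi; move: nab => /eqP; lia.
have : has (fun l => ~~ okp E Q g l) (iota 0 n.-1) by rewrite has_count.
case/hasP => l; rewrite mem_iota => /andP [_ hl] bad.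
pose p := if l == 0 then 1 else l.
have p0 : 0 < p by rewrite /p; case: (eqVneq l 0) => e /=; lia.
have hpn : p.+1 < n by rewrite /p; case: (eqVneq l 0) => e /=; lia.
have lp : (l == p.-1) || (l == p) by rewrite /p; case: (eqVneq l 0) => e /=; apply/orP; [left|right]; apply/eqP; lia.
pose cands := [seq j <- iota 1 n.-2 | (j != p) && (j != p.-1) && (j != p.+1)].
have candP : forall j, j \in cands ->
    [/\ 0 < j, j.+1 < n, j != p, j != p.-1 & j != p.+1].
  move=> j; rewrite mem_filter mem_iota => /andP [/andP [/andP [a b] c] d].
  split => //; lia.
have ucands : uniq cands by rewrite filter_uniq // iota_uniq.
have scands : n - 5 <= size cands.
  rewrite size_filter.
  have := count_predC (fun j => (j != p) && (j != p.-1) && (j != p.+1)) (iota 1 n.-2).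
  have : count (predC (fun j => (j != p) && (j != p.-1) && (j != p.+1))) (iota 1 n.-2) <= 3.
    apply: leq_trans (count3 p p.-1 p.+1 (iota_uniq 1 n.-2)).
    by apply: sub_count => j /=; rewrite !negb_and !negbK.
  rewrite size_iota; lia.
pose u := g p.
pose c1 := fun j => compat E (nth false Q p.-1) (g p.-1) (g j).
pose c2 := fun j => compat E (nth false Q p) (g j) (g p.+1).
pose c3 := fun j => compat E (nth false Q j.-1) (g j.-1) u.
pose c4 := fun j => compat E (nth false Q j) u (g j.+1).
have injc : {in cands &, injective g}.
  move=> a b /candP [? ? ? ? ?] /candP [? ? ? ? ?]; apply: gi; lia.
have injm : {in cands &, injective (fun j => g j.-1)}.
  move=> a b /candP [? ? ? ? ?] /candP [? ? ? ? ?] /gi; lia.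
have injp : {in cands &, injective (fun j => g j.+1)}.
  move=> a b /candP [? ? ? ? ?] /candP [? ? ? ? ?] /gi; lia.
have b1 : count (fun j => ~~ c1 j) cands <=
          #|[pred w | ~~ compat E (nth false Q p.-1) (g p.-1) w && (w != g p.-1)]|.
  apply: (count_inj_le (fun w => ~~ compat E (nth false Q p.-1) (g p.-1) w)) => //.
  move=> j /candP [? ? ? ? ?]; apply: gne; lia.
have b2 : count (fun j => ~~ c2 j) cands <=
          #|[pred w | ~~ compat E (~~ nth false Q p) (g p.+1) w && (w != g p.+1)]|.
  rewrite (eq_count (a2 := fun j => ~~ compat E (~~ nth false Q p) (g p.+1) (g j))); last first.
    by move=> j; rewrite /c2 compat_sym.
  apply: (count_inj_le (fun w => ~~ compat E (~~ nth false Q p) (g p.+1) w)) => //.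
  move=> j /candP [? ? ? ? ?]; apply: gne; lia.
have b3 : count (fun j => ~~ c3 j) cands <=
          #|[pred w | ~~ compat E true u w && (w != u)]| +
          #|[pred w | ~~ compat E false u w && (w != u)]|.
  apply: leq_trans (count_split2 (b := fun j => ~~ compat E true u (g j.-1))
                                  (c := fun j => ~~ compat E false u (g j.-1)) _ _) _.
    by move=> j; apply: compat_split.
  apply: leq_add.
    apply: (count_inj_le (f := fun j => g j.-1) (fun w => ~~ compat E true u w)) => //.
    move=> j /candP [? ? ? ? ?]; apply: gne; lia.
  apply: (count_inj_le (f := fun j => g j.-1) (fun w => ~~ compat E false u w)) => //.
  move=> j /candP [? ? ? ? ?]; apply: gne; lia.
have b4 : count (fun j => ~~ c4 j) cands <=
          #|[pred w | ~~ compat E true u w && (w != u)]| +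
          #|[pred w | ~~ compat E false u w && (w != u)]|.
  apply: leq_trans (count_split2 (b := fun j => ~~ compat E true u (g j.+1))
                                  (c := fun j => ~~ compat E false u (g j.+1)) _ _) _.
    by move=> j; apply: compat_split'.
  apply: leq_add.
    apply: (count_inj_le (f := fun j => g j.+1) (fun w => ~~ compat E true u w)) => //.
    move=> j /candP [? ? ? ? ?]; apply: gne; lia.
  apply: (count_inj_le (f := fun j => g j.+1) (fun w => ~~ compat E false u w)) => //.
  move=> j /candP [? ? ? ? ?]; apply: gne; lia.
have := miss1 irr H (g p.-1) (nth false Q p.-1).
have := miss1 irr H (g p.+1) (~~ nth false Q p).
have := miss1 irr H u true.
have := miss1 irr H u false.
have := @count4 nat cands c1 c2 c3 c4.
move=> h4 m1 m2 m3 m4.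
have [j jc gj] : exists2 j, j \in cands & [&& c1 j, c2 j, c3 j & c4 j].
  apply: exists_in.
  rewrite (eq_count (a2 := fun j => ~~ [&& c1 j, c2 j, c3 j & c4 j])) //.
  have nV : n = #|V| by [].
  apply: (leq_ltn_trans h4).
  apply: leq_ltn_trans (leq_add (leq_add (leq_add b1 b2) b3) b4) _.
  move: scands m1 m2 m3 m4; rewrite -nV.
  move: (size cands) (#|[pred w | ~~ compat E true u w && (w != u)]|)
    (#|[pred w | ~~ compat E false u w && (w != u)]|)
    (#|[pred w | ~~ compat E (nth false Q p.-1) (g p.-1) w && (w != g p.-1)]|)
    (#|[pred w | ~~ compat E (~~ nth false Q p) (g p.+1) w && (w != g p.+1)]|).
  clear; move=> *; lia.
case/and4P: gj => h1 h2 h3 h4'.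
have [j0 jn jp jp1 jp2] := candP j jc.
clear b1 b2 b3 b4 h4 m1 m2 m3 m4 injc injm injp scands ucands candP H.
exists (swapf g p j); split.
- apply: swap_inj => //. Time lia. Time lia.
- have e1 : (0 == p) = false by apply/eqP; lia.
  have e2 : (0 == j) = false by apply/eqP; lia.
  by rewrite /swapf e1 e2.
- have e1 : (n.-1 == p) = false by apply/eqP; lia.
  have e2 : (n.-1 == j) = false by apply/eqP; lia.
  by rewrite /swapf e1 e2.
- Time apply: (improve (l0 := l)) => //; lia.
Qed.


Lemma part1 (V : finType) (E : rel V) : digraph E ->
     (forall v : V, 7 * #|V| <= 8 * outdeg E v /\ 7 * #|V| <= 8 * indeg E v) ->
     forall x y : V, x != y ->
     forall Q : path_orientation #|V|, hamilton_copy_xy E Q x y.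
Proof.
move=> irr H x y xy Q.
have n8 : 8 <= #|V|.
  have : outdeg E x <= #|predC1 x|.
    rewrite /outdeg; apply: subset_leq_card; apply/subsetP => w.
    by rewrite !inE; apply: contraTneq => ->; rewrite irr.
  rewrite cardC1.
  have : 0 < #|V| by apply/card_gt0P; exists x.
  have := H x; lia.
pose r := enum [pred w | (w != x) && (w != y)].
have cr : size r = #|V| - 2.
  rewrite -cardE.
  have := cardD1 x (predC1 y); rewrite cardC1 inE /= xy.
  have -> : #|[predD1 predC1 y & x]| = #|[pred w | (w != x) && (w != y)]|.
    by apply: eq_card => w; rewrite !inE.
  lia.
pose s := rcons (x :: r) y.
have ss : size s = #|V|.
  rewrite size_rcons /= cr; move: n8; move: #|V| => k; lia.
have us : uniq s.
  have yr : y \notin r by rewrite /r mem_enum inE eqxx andbF.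
  have xr : x \notin r by rewrite /r mem_enum inE eqxx.
  by rewrite rcons_uniq inE negb_or eq_sym xy yr /= xr enum_uniq.
pose g := fun l => nth x s l.
have ginj : {in iota 0 #|V| &, injective g}.
  move=> a b; rewrite !mem_iota => /andP [_ ha] /andP [_ hb] /eqP.
  by rewrite /g nth_uniq ?ss // => /eqP.
have g0 : g 0 = x by [].
have gn : g #|V|.-1 = y by rewrite /g -ss nth_last /s last_rcons.
have [g' [[g'inj [g'0 g'n]] bc]] : exists g', ({in iota 0 #|V| &, injective g'} /\ g' 0 = x
     /\ g' #|V|.-1 = y) /\ badcnt E Q #|V| g' = 0.
  apply: (@iterate V E Q #|V| (fun g => {in iota 0 #|V| &, injective g} /\ g 0 = x /\ g #|V|.-1 = y)); last first.
    exact: (conj ginj (conj g0 gn)).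
  move=> g1 [a [b c]] bp; have [g2 [a' b' c' d']] := step1 irr H n8 a b c bp.
  by exists g2.
apply: (finish (g := g')) => //; lia.
Qed.

Lemma missAB (V : finType) (E : rel V) (A : {set V}) (m : nat) :
  #|A| = m.+1 -> #|~: A| = m ->
  (forall u v : V, E u v -> (u \in A) != (v \in A)) ->
  (forall v : V, 7 * m + 2 <= 8 * outdeg E v /\ 7 * m + 2 <= 8 * indeg E v) ->
  forall a b,
  (a \in A -> 8 * #|[pred w | ~~ compat E b a w && (w \notin A)]| + 2 <= m) /\
  (a \notin A -> 8 * #|[pred w | ~~ compat E b a w && (w \in A)]| <= m + 6).
Proof.
move=> cA cB hb H a b; split => ha.
  have hC : forall w, E a w || E w a -> (fun w => w \notin A) w.
    move=> w /orP [] /hb; rewrite ha; by case: (w \in A).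
  have e := @miss_card V E a b (fun w => w \notin A) hC.
  have cn : #|(fun w => w \notin A)| = m.
    by rewrite -cB; apply: eq_card => w; rewrite !inE.
  rewrite cn in e; have := H a; case: b e => /= e; lia.
have hC : forall w, E a w || E w a -> (fun w => w \in A) w.
  move=> w /orP [] /hb; rewrite (negbTE ha); by case: (w \in A).
have e := @miss_card V E a b (fun w => w \in A) hC.
have cn : #|(fun w => w \in A)| = m.+1.
  by rewrite -cA; apply: eq_card => w; by [].
rewrite cn in e.
have := H a; case: b e => /= e; lia.
Qed.

Lemma step2 (V : finType) (E : rel V) (A : {set V}) (m : nat) :
  10 <= m -> #|A| = m.+1 -> #|~: A| = m ->
  (forall u v : V, E u v -> (u \in A) != (v \in A)) ->
  (forall v : V, 7 * m + 2 <= 8 * outdeg E v /\ 7 * m + 2 <= 8 * indeg E v) ->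
  forall (Q : seq bool) (x y : V) (g : nat -> V),
  {in iota 0 (2 * m + 1) &, injective g} ->
  (forall l, l < 2 * m + 1 -> (g l \in A) = ~~ odd l) ->
  g 0 = x -> g (2 * m) = y -> okp E Q g 0 -> okp E Q g (2 * m).-1 ->
  0 < badcnt E Q (2 * m + 1) g ->
  exists g', [/\ {in iota 0 (2 * m + 1) &, injective g'},
      (forall l, l < 2 * m + 1 -> (g' l \in A) = ~~ odd l),
      g' 0 = x /\ g' (2 * m) = y, okp E Q g' 0 /\ okp E Q g' (2 * m).-1 &
      badcnt E Q (2 * m + 1) g' < badcnt E Q (2 * m + 1) g].
Proof.
move=> m10 cA cB hb H Q x y g ginj par g0 gK ok0 okK bpos.
have gi : forall a b, a < (2 * m + 1) -> b < (2 * m + 1) -> g a = g b -> a = b.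
  by move=> a b ha hb' e; apply: ginj; rewrite // mem_iota; slia.
have gne : forall a b, a < (2 * m + 1) -> b < (2 * m + 1) -> a != b -> g a != g b.
  by move=> a b ha hb' nab; apply/eqP => /gi; move: nab => /eqP; slia.
have : has (fun l => ~~ okp E Q g l) (iota 0 (2 * m + 1).-1) by rewrite has_count.
case/hasP => l; rewrite mem_iota => /andP [_ hl] bad.
have l0 : l != 0 by apply: contraNneq bad => ->.
have l1 : l != (2 * m).-1 by apply: contraNneq bad => ->.
pose p := if odd l then l.+1 else l.
pose q := p./2.
have ep : ~~ odd p by rewrite /p; case: (boolP (odd l)) => o //=; rewrite o.
have pq : p = 2 * q.
  have := odd_double_half p; rewrite (negbTE ep) add0n -mul2n /q => e; by rewrite e.
have pl : (p = l.+1 /\ odd l) \/ (p = l /\ ~~ odd l).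
  by rewrite /p; case: (boolP (odd l)) => o; [left|right].
have q1 : 1 <= q by case: pl => [[h _]|[h _]]; move: l0 => /eqP; slia.
have qm : q <= m.-1.
  case: pl => [[h o]|[h o]]; last by move: l0 l1 => /eqP n1 /eqP n2; slia.
  have : l != (2 * m).-2 by apply/eqP => e; move: o; rewrite e (_ : (2 * m).-2 = (m.-1).*2) ?odd_double //; rewrite -mul2n; slia.
  move: l1 => /eqP n1 /eqP n2; slia.
have lp : (l == p.-1) || (l == p).
  case: pl => [[h _]|[h _]]; apply/orP; [left|right]; apply/eqP; slia.
pose cands := [seq j <- map (fun i => 2 * i) (iota 1 m.-1) | j != p].
have candP : forall j, j \in cands ->
    exists i, [/\ j = 2 * i, 1 <= i, i <= m.-1 & i != q].
  move=> j; rewrite mem_filter => /andP [jp /mapP [i]]; rewrite mem_iota => hi ji.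
  exists i; split => //; [slia|slia|]; apply/eqP => iq; move: jp; rewrite ji iq pq eqxx.
  by [].
have ucands : uniq cands.
  rewrite filter_uniq // map_inj_uniq ?iota_uniq //; move=> a b; slia.
have scands : size cands = m - 2.
  rewrite size_filter.
  have := count_predC (fun j => j != p) (map (fun i => 2 * i) (iota 1 m.-1)).
  have : count (predC (fun j => j != p)) (map (fun i => 2 * i) (iota 1 m.-1)) = 1.
    rewrite (eq_count (a2 := pred1 p)); last by move=> j; rewrite /= negbK.
    rewrite count_uniq_mem; last by rewrite map_inj_uniq ?iota_uniq //; move=> a b; slia.
    suff -> : p \in map (fun i => 2 * i) (iota 1 m.-1) by [].
    by apply/mapP; exists q => //; rewrite mem_iota; slia.
  rewrite size_map size_iota; slia.
have parA : forall l, l < (2 * m + 1) -> ~~ odd l -> g l \in A by move=> l' h o; rewrite par.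
have parB : forall l, l < (2 * m + 1) -> odd l -> g l \notin A by move=> l' h o; rewrite par // o.
have oddm1 : forall i, 1 <= i -> odd (2 * i).-1.
  move=> i hi; have -> : (2 * i).-1 = (i.-1).*2.+1 by rewrite -mul2n; slia.
  by rewrite /= odd_double.
have oddp1 : forall i, odd (2 * i).+1 by move=> i; rewrite /= mul2n odd_double.
have evn : forall i, ~~ odd (2 * i) by move=> i; rewrite mul2n odd_double.
pose u := g p.
have uA : u \in A by rewrite /u parA ?pq ?evn //; slia.
have a1B : g p.-1 \notin A by rewrite parB ?pq ?oddm1 //; slia.
have a2B : g p.+1 \notin A by rewrite parB ?pq ?oddp1 //; slia.
pose c1 := fun j => compat E (nth false Q p.-1) (g p.-1) (g j).
pose c2 := fun j => compat E (nth false Q p) (g j) (g p.+1).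
pose c3 := fun j => compat E (nth false Q j.-1) (g j.-1) u.
pose c4 := fun j => compat E (nth false Q j) u (g j.+1).
have injc : {in cands &, injective g}.
  move=> a b /candP [? [-> ? ? ?]] /candP [? [-> ? ? ?]]; apply: gi; slia.
have injm : {in cands &, injective (fun j => g j.-1)}.
  move=> a b /candP [? [-> ? ? ?]] /candP [? [-> ? ? ?]] /gi; slia.
have injp : {in cands &, injective (fun j => g j.+1)}.
  move=> a b /candP [? [-> ? ? ?]] /candP [? [-> ? ? ?]] /gi; slia.
pose P1 := fun w => ~~ compat E (nth false Q p.-1) (g p.-1) w && (w \in A).
pose P2 := fun w => ~~ compat E (~~ nth false Q p) (g p.+1) w && (w \in A).
have b1 : count (fun j => ~~ c1 j) cands + P1 u <= #|P1|.
  rewrite -(card_minus1 P1 u) leq_add2r.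
  apply: leq_trans (count_inj_le (fun w => ~~ compat E (nth false Q p.-1) (g p.-1) w)
                    (R := fun w => (w \in A) && (w != u)) ucands injc _) _.
    move=> j /candP [i [-> ? ? ?]]; rewrite parA ?evn //=; last slia.
    apply: gne; slia.
  by apply: subset_leq_card; apply/subsetP => w; rewrite !inE /P1 andbA.
have b2 : count (fun j => ~~ c2 j) cands + P2 u <= #|P2|.
  rewrite -(card_minus1 P2 u) leq_add2r.
  rewrite (eq_count (a2 := fun j => ~~ compat E (~~ nth false Q p) (g p.+1) (g j))); last first.
    by move=> j; rewrite /c2 compat_sym.
  apply: leq_trans (count_inj_le (fun w => ~~ compat E (~~ nth false Q p) (g p.+1) w)
                    (R := fun w => (w \in A) && (w != u)) ucands injc _) _.
    move=> j /candP [i [-> ? ? ?]]; rewrite parA ?evn //=; last slia.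
    apply: gne; slia.
  by apply: subset_leq_card; apply/subsetP => w; rewrite !inE /P2 andbA.
have b3 : count (fun j => ~~ c3 j) cands <=
          #|[pred w | ~~ compat E true u w && (w \notin A)]| +
          #|[pred w | ~~ compat E false u w && (w \notin A)]|.
  apply: leq_trans (count_split2 (b := fun j => ~~ compat E true u (g j.-1))
                                  (c := fun j => ~~ compat E false u (g j.-1)) _ _) _.
    by move=> j; apply: compat_split.
  apply: leq_add.
    apply: (count_inj_le (f := fun j => g j.-1) (fun w => ~~ compat E true u w)) => //.
    move=> j /candP [i [-> ? ? ?]]; rewrite parB ?oddm1 //; slia.
  apply: (count_inj_le (f := fun j => g j.-1) (fun w => ~~ compat E false u w)) => //.
  move=> j /candP [i [-> ? ? ?]]; rewrite parB ?oddm1 //; slia.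
have b4 : count (fun j => ~~ c4 j) cands <=
          #|[pred w | ~~ compat E true u w && (w \notin A)]| +
          #|[pred w | ~~ compat E false u w && (w \notin A)]|.
  apply: leq_trans (count_split2 (b := fun j => ~~ compat E true u (g j.+1))
                                  (c := fun j => ~~ compat E false u (g j.+1)) _ _) _.
    by move=> j; apply: compat_split'.
  apply: leq_add.
    apply: (count_inj_le (f := fun j => g j.+1) (fun w => ~~ compat E true u w)) => //.
    move=> j /candP [i [-> ? ? ?]]; rewrite parB ?oddp1 //; slia.
  apply: (count_inj_le (f := fun j => g j.+1) (fun w => ~~ compat E false u w)) => //.
  move=> j /candP [i [-> ? ? ?]]; rewrite parB ?oddp1 //; slia.
have hbad : P1 u || P2 u.
  move: lp bad => /orP [] /eqP ->; rewrite /okp.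
    rewrite (_ : p.-1.+1 = p); last slia.
    by move=> h; apply/orP; left; rewrite /P1 uA andbT.
  rewrite compat_sym => h; apply/orP; right; by rewrite /P2 uA andbT.
have m1 := (missAB cA cB hb H (g p.-1) (nth false Q p.-1)).2 a1B.
have m2 := (missAB cA cB hb H (g p.+1) (~~ nth false Q p)).2 a2B.
have m3 := (missAB cA cB hb H u true).1 uA.
have m4 := (missAB cA cB hb H u false).1 uA.
have e1 : #|P1| = #|[pred w | ~~ compat E (nth false Q p.-1) (g p.-1) w && (w \in A)]| by [].
have e2 : #|P2| = #|[pred w | ~~ compat E (~~ nth false Q p) (g p.+1) w && (w \in A)]| by [].
have h4 := @count4 nat cands c1 c2 c3 c4.
have hb12 : 1 <= P1 u + P2 u by case: (P1 u) hbad; case: (P2 u).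
have [j jc gj] : exists2 j, j \in cands & [&& c1 j, c2 j, c3 j & c4 j].
  apply: exists_in.
  rewrite (eq_count (a2 := fun j => ~~ [&& c1 j, c2 j, c3 j & c4 j])) //.
  apply: (leq_ltn_trans h4).
  rewrite scands.
  move: b1 b2 b3 b4 m1 m2 m3 m4 hb12 m10 e1 e2.
  move: (count (fun j : nat => ~~ c1 j) cands) (count (fun j : nat => ~~ c2 j) cands)
    (count (fun j : nat => ~~ c3 j) cands) (count (fun j : nat => ~~ c4 j) cands)
    (P1 u : nat) (P2 u : nat) #|P1| #|P2|
    (#|[pred w | ~~ compat E true u w && (w \notin A)]|)
    (#|[pred w | ~~ compat E false u w && (w \notin A)]|)
    (#|[pred w | ~~ compat E (nth false Q p.-1) (g p.-1) w && (w \in A)]|)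
    (#|[pred w | ~~ compat E (~~ nth false Q p) (g p.+1) w && (w \in A)]|).
  clear; move=> *; slia.
case/and4P: gj => h1 h2 h3 h4'.
have [i [ji i1 im iq]] := candP j jc.
clear b1 b2 b3 b4 h4 m1 m2 m3 m4 injc injm injp scands ucands candP H e1 e2.
have jp : j != p by apply/eqP; move: iq => /eqP; slia.
exists (swapf g p j); split.
- apply: swap_inj => //; slia.
- move=> l' hl'; rewrite /swapf; case: eqP => [->|_].
    by rewrite par ?ji ?evn ?pq ?evn //; slia.
  case: eqP => [->|_]; last exact: par.
  by rewrite par ?ji ?pq ?evn //; slia.
- have e1 : (0 == p) = false by apply/eqP; slia.
  have e2 : (0 == j) = false by apply/eqP; slia.
  have e3 : (2 * m == p) = false by apply/eqP; slia.
  have e4 : (2 * m == j) = false by apply/eqP; slia.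
  by rewrite /swapf e1 e2 e3 e4.
- have e1 : (0 == p) = false by apply/eqP; slia.
  have e2 : (0 == j) = false by apply/eqP; slia.
  have e3 : (1 == p) = false by apply/eqP; slia.
  have e4 : (1 == j) = false by apply/eqP; slia.
  have e5 : ((2 * m).-1 == p) = false by apply/eqP; slia.
  have e6 : ((2 * m).-1 == j) = false by apply/eqP; slia.
  have e7 : ((2 * m).-1.+1 == p) = false by apply/eqP; slia.
  have e8 : ((2 * m).-1.+1 == j) = false by apply/eqP; slia.
  by split; rewrite /okp /swapf ?e1 ?e2 ?e3 ?e4 ?e5 ?e6 ?e7 ?e8.
- have jp1 : j != p.-1 by apply/eqP; slia.
  have jp2 : j != p.+1 by apply/eqP; slia.
  apply: (improve (l0 := l)) => //; slia.
Qed.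


Lemma exists_nb (V : finType) (E : rel V) (a : V) (b : bool) (z : V) :
  1 < (if b then outdeg E a else indeg E a) -> exists w, compat E b a w && (w != z).
Proof.
move=> hd.
have cS : #|[pred w | compat E b a w]| = (if b then outdeg E a else indeg E a).
  by rewrite /outdeg /indeg; case: (b) => /=; apply: eq_card => w; rewrite !inE.
have := cardD1 z [pred w | compat E b a w]; rewrite cS => e.
have : 0 < #|[predD1 [pred w | compat E b a w] & z]|.
  move: e hd; case: (z \in _) => /=; move: (if b then _ else _) => d;
  move: (#|[predD1 _ & z]|) => k; lia.
case/card_gt0P => w; rewrite !inE => /andP [wz cw].
by exists w; rewrite cw wz.
Qed.

Lemma card_minus2 (V : finType) (P : pred V) a b : P a -> P b -> a != b ->
  #|[pred w | P w && (w != a) && (w != b)]| + 2 = #|P|.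
Proof.
move=> Pa Pb ab.
have e1 := card_minus1 P a; rewrite Pa /= in e1.
have e2 : #|[pred w | P w && (w != a) && (w != b)]| + 1 = #|[pred w | P w && (w != a)]|.
  have := card_minus1 [pred w | P w && (w != a)] b.
  rewrite /= Pb eq_sym ab /= => h; apply: etrans h; congr (_ + _); by apply: eq_card.
move: e1 e2.
generalize #|P| #|[pred w | P w && (w != a)]| #|[pred w | P w && (w != a) && (w != b)]|.
move=> *; lia.
Qed.

Lemma part2 (m : nat) : 10 <= m ->
   forall (V : finType) (E : rel V) (A : {set V}), digraph E ->
     #|A| = m.+1 -> #|~: A| = m ->
     (forall u v : V, E u v -> (u \in A) != (v \in A)) ->
     (forall v : V, 7 * m + 2 <= 8 * outdeg E v /\ 7 * m + 2 <= 8 * indeg E v) ->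
     forall x y : V, x \in A -> y \in A -> x != y ->
     forall Q : path_orientation (2 * m + 1), hamilton_copy_xy E Q x y.
Proof.
move=> m10 V E A irr cA cB hb H x y xA yA xy Q.
have cV : #|V| = 2 * m + 1 by rewrite -(cardsC A) cA cB; slia.
have side : forall a w b, a \in A -> compat E b a w -> w \notin A.
  move=> a w b aA; rewrite /compat; case: b => /hb; rewrite aA; by case: (w \in A).
have deg2 : forall a b, 1 < (if b then outdeg E a else indeg E a).
  move=> a b; have := H a; case: b => /=; move: (outdeg E a) (indeg E a) => o i; slia.
have [b1 /andP [cb1 _]] := exists_nb (E := E) (a := x) x (deg2 x (nth false Q 0)).
have [b2 /andP [cb2 b21]] := exists_nb (E := E) (a := y) b1 (deg2 y (~~ nth false Q (2 * m).-1)).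
have b12 : b1 != b2 by rewrite eq_sym.
have b1A : b1 \notin A := side _ _ _ xA cb1.
have b2A : b2 \notin A := side _ _ _ yA cb2.
pose ra := enum [pred w | (w \in A) && (w != x) && (w != y)].
pose rb := enum [pred w | (w \notin A) && (w != b1) && (w != b2)].
pose sa := rcons (x :: ra) y.
pose sb := rcons (b1 :: rb) b2.
have sza : size sa = m.+1.
  rewrite size_rcons /= /ra -cardE.
  have := card_minus2 (P := [pred w | w \in A]) xA yA xy.
  have -> : #|[pred w | w \in A]| = m.+1 by rewrite -cA; apply: eq_card.
  move=> e; rewrite -(_ : #|[pred w | [pred w | w \in A] w && (w != x) && (w != y)]| =
     #|[pred w | (w \in A) && (w != x) && (w != y)]|) ?e; last by apply: eq_card.
  move: e; generalize #|[pred w | [pred w | w \in A] w && (w != x) && (w != y)]|.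
  move=> *; slia.
have szb : size sb = m.
  rewrite size_rcons /= /rb -cardE.
  have := card_minus2 (P := [pred w | w \notin A]) b1A b2A b12.
  have -> : #|[pred w | w \notin A]| = m by rewrite -cB; apply: eq_card => w; rewrite !inE.
  move=> e; rewrite -(_ : #|[pred w | [pred w | w \notin A] w && (w != b1) && (w != b2)]| =
     #|[pred w | (w \notin A) && (w != b1) && (w != b2)]|) ?e; last by apply: eq_card.
  move: e; generalize #|[pred w | [pred w | w \notin A] w && (w != b1) && (w != b2)]|.
  move=> *; slia.
have usa : uniq sa.
  have yr : y \notin ra by rewrite /ra mem_enum inE eqxx !andbF.
  have xr : x \notin ra by rewrite /ra mem_enum inE eqxx andbF.
  by rewrite rcons_uniq inE negb_or eq_sym xy yr /= xr enum_uniq.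
have usb : uniq sb.
  have yr : b2 \notin rb by rewrite /rb mem_enum inE eqxx !andbF.
  have xr : b1 \notin rb by rewrite /rb mem_enum inE eqxx andbF.
  by rewrite rcons_uniq inE negb_or eq_sym b12 yr /= xr enum_uniq.
have memA : forall w, w \in sa -> w \in A.
  move=> w; rewrite mem_rcons !inE => /orP [/eqP -> //|/orP [/eqP -> //|]].
  by rewrite /ra mem_enum inE => /andP [/andP []].
have memB : forall w, w \in sb -> w \notin A.
  move=> w; rewrite mem_rcons !inE => /orP [/eqP -> //|/orP [/eqP -> //|]].
  by rewrite /rb mem_enum inE => /andP [/andP []].
pose g := fun l => if odd l then nth x sb l./2 else nth x sa l./2.
have hh : forall l, odd l + 2 * l./2 = l by move=> l; rewrite mul2n odd_double_half.
have par : forall l, l < 2 * m + 1 -> (g l \in A) = ~~ odd l.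
  move=> l hl; rewrite /g; have := hh l; case: (odd l) => /= e.
    apply/negbTE; apply: memB; apply: mem_nth; rewrite szb; slia.
  apply: memA; apply: mem_nth; rewrite sza; slia.
have ginj : {in iota 0 (2 * m + 1) &, injective g}.
  move=> l1 l2; rewrite !mem_iota => /andP [_ h1] /andP [_ h2] e.
  rewrite add0n in h1 h2.
  have eo : odd l1 = odd l2.
    apply/eqP; rewrite -(inj_eq negb_inj) -(par _ h1) -(par _ h2) e eqxx //.
  have := hh l1; have := hh l2; move: e; rewrite /g -eo.
  case: (odd l1) => /= e e2 e1.
    have : l1./2 = l2./2.
      by apply/eqP; rewrite -(nth_uniq x _ _ usb) ?szb ?e //; slia.
    slia.
  have : l1./2 = l2./2.
    by apply/eqP; rewrite -(nth_uniq x _ _ usa) ?sza ?e //; slia.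
  slia.
have g0 : g 0 = x by [].
have gm : g (2 * m) = y.
  rewrite /g mul2n odd_double -mul2n (_ : (2 * m)./2 = (size sa).-1).
    by rewrite nth_last last_rcons.
  by rewrite sza mul2n doubleK.
have ok0 : okp E Q g 0 by rewrite /okp /g /=.
have okK : okp E Q g (2 * m).-1.
  rewrite /okp (_ : (2 * m).-1.+1 = 2 * m); last slia.
  have e21 : (2 * m).-1 = (m.-1).*2.+1 by rewrite -mul2n; slia.
  have o : odd (2 * m).-1 by rewrite e21 /= odd_double.
  have hf : ((2 * m).-1)./2 = (size sb).-1 by rewrite szb e21 /= uphalf_double.
  rewrite gm /g o hf nth_last last_rcons compat_sym; exact: cb2.
have [g' [[g'inj [g'par [g'0 [g'm [g'ok0 g'okK]]]]] bc]] :
  exists g', ({in iota 0 (2 * m + 1) &, injective g'} /\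
     (forall l, l < 2 * m + 1 -> (g' l \in A) = ~~ odd l) /\
     g' 0 = x /\ g' (2 * m) = y /\ okp E Q g' 0 /\ okp E Q g' (2 * m).-1) /\
     badcnt E Q (2 * m + 1) g' = 0.
  apply: (@iterate V E Q (2 * m + 1) (fun g => {in iota 0 (2 * m + 1) &, injective g} /\
     (forall l, l < 2 * m + 1 -> (g l \in A) = ~~ odd l) /\
     g 0 = x /\ g (2 * m) = y /\ okp E Q g 0 /\ okp E Q g (2 * m).-1) _ g); last first.
    exact: (conj ginj (conj par (conj g0 (conj gm (conj ok0 okK))))).
  move=> g1 [a [b [c [d [e f]]]]] bp.
  have [g2 [a' b' [c' d'] [e' f'] h']] := step2 m10 cA cB hb H a b c d e f bp.
  by exists g2.
apply: (finish (g := g')) => //; rewrite ?addn1 //.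
Qed.

Theorem proposition4p2 :
  (* (i) *)
  (forall (V : finType) (E : rel V), digraph E ->
     (forall v : V, 7 * #|V| <= 8 * outdeg E v /\ 7 * #|V| <= 8 * indeg E v) ->
     forall x y : V, x != y ->
     forall Q : path_orientation #|V|, hamilton_copy_xy E Q x y)
  /\
  (* (ii) *)
  (forall (m : nat), 10 <= m ->
   forall (V : finType) (E : rel V) (A : {set V}), digraph E ->
     #|A| = m.+1 -> #|~: A| = m ->
     (forall u v : V, E u v -> (u \in A) != (v \in A)) ->
     (forall v : V, 7 * m + 2 <= 8 * outdeg E v /\ 7 * m + 2 <= 8 * indeg E v) ->
     forall x y : V, x \in A -> y \in A -> x != y ->
     forall Q : path_orientation (2 * m + 1), hamilton_copy_xy E Q x y).
Proof.
split.
- exact: part1.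
- exact: part2.
Qed.
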